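(* Fix $\nu>0$. In the setting of the context (one equality constraint, no inequality constraints), let $(\bar\mu,\bar\tau,\bar\sigma_f,\bar\sigma_h)$ be a critical point of the augmented canonical dual function $P^d_\nu$ in the interior of its domain. Then $\bar\tau=0$, $(\bar\mu,\bar\sigma_f,\bar\sigma_h)$ is a critical point of $P^d$, and $$P^d_\nu(\bar\mu,0,\bar\sigma_f,\bar\sigma_h)=P^d(\bar\mu,\bar\sigma_f,\bar\sigma_h).$$
   Context: Problem: minimize $f(x)$ over $x\in\mathbb{R}^n$ subject to a single equality constraint $h(x)=0$, where $f(x)=V_f(\Lambda_f(x))+\tfrac12x^TAx-c^Tx$ ($A$ symmetric, $c\in\mathbb{R}^n$) and $h(x)=V_h(\Lambda_h(x))\in\mathbb{R}$. Here $\Lambda_f:\mathbb{R}^n\to\mathbb{R}^{k_f}$, $\Lambda_h:\mathbb{R}^n\to\mathbb{R}^{l}$ are quadratic maps (components polynomials of degree at most 2), and $V_f,V_h$ are ''canonical functions'': each $V$ is differentiable on an open set $E$ containing the image of its $\Lambda$, $\nabla V:E\to E^*$ is a bijection onto an open set $E^*$, and the Legendre conjugate $V^*(\sigma)=\sigma^T\xi-V(\xi)$, $\xi=(\nabla V)^{-1}(\sigma)$, is differentiable on $E^*$ with $\nabla V^*=(\nabla V)^{-1}$. Augmented Lagrangian: $\mathcal L_\nu(x,\mu)=f(x)+\mu h(x)+\frac{1}{2\nu}h(x)^2$. Its total complementarity function, for $\mu,\tau\in\mathbb{R}$, $\sigma_f\in E_f^*$, $\sigma_h\in E_h^*$: $$\Xi_1^\nu(x,\mu,\tau,\sigma_f,\sigma_h)=\Lambda_f(x)^T\sigma_f-V_f^*(\sigma_f)+(\mu+\tau)\big[\Lambda_h(x)^T\sigma_h-V_h^*(\sigma_h)\big]-\tfrac{\nu}{2}\tau^2+\tfrac12x^TAx-c^Tx.$$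 This is quadratic in $x$; $P^d_\nu(\mu,\tau,\sigma_f,\sigma_h)$ is defined, on the open set where the $x$-Hessian $\nabla_x^2\Xi_1^\nu$ is nonsingular, as the value of $\Xi_1^\nu(\cdot,\mu,\tau,\sigma_f,\sigma_h)$ at its unique stationary point in $x$. Similarly, with $\Xi_1(x,\mu,\sigma_f,\sigma_h)=\Lambda_f(x)^T\sigma_f-V_f^*(\sigma_f)+\mu[\Lambda_h(x)^T\sigma_h-V_h^*(\sigma_h)]+\tfrac12x^TAx-c^Tx$, the (non-augmented) canonical dual function $P^d(\mu,\sigma_f,\sigma_h)$ is defined, where $\nabla_x^2\Xi_1$ is nonsingular, as the value of $\Xi_1(\cdot,\mu,\sigma_f,\sigma_h)$ at its unique stationary point in $x$. *)

(* Defs.v *)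
From Stdlib Require Import Reals ClassicalEpsilon.
From mathcomp Require Import ssreflect ssrfun ssrbool eqtype ssrnat seq fintype bigop.
Set Implicit Arguments.
Unset Strict Implicit.
Open Scope R_scope.

Definition vec (n : nat) := 'I_n -> R.
Definition vsum (n : nat) (f : 'I_n -> R) : R := \big[Rplus/0]_(i < n) f i.
Definition dot (n : nat) (u v : vec n) : R := vsum (fun i => u i * v i).
Definition vsub (n : nat) (u v : vec n) : vec n := fun i => u i - v i.
Definition vnorm (n : nat) (v : vec n) : R := sqrt (dot v v).

Definition open_set (n : nat) (E : vec n -> Prop) : Prop :=
  forall x, E x -> exists r, 0 < r /\ forall y, vnorm (vsub y x) < r -> E y.

Definition has_gradient (n : nat) (f : vec n -> R) (x g : vec n) : Prop :=
  forall eps, 0 < eps -> exists d, 0 < d /\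
    forall y, vnorm (vsub y x) < d ->
      Rabs (f y - f x - dot g (vsub y x)) <= eps * vnorm (vsub y x).

(* Legendre conjugate V^*(s) = s^T xi - V(xi), xi = (grad V)^{-1}(s) *)
Definition conj_fun (n : nat) (V : vec n -> R) (ginv : vec n -> vec n) (s : vec n) : R :=
  dot s (ginv s) - V (ginv s).

Definition is_canonical (n : nat) (V : vec n -> R) (E Es : vec n -> Prop)
    (gradV ginv : vec n -> vec n) : Prop :=
  open_set E /\ open_set Es /\
  (forall xi, E xi -> has_gradient V xi (gradV xi)) /\
  (forall xi, E xi -> Es (gradV xi)) /\
  (forall s, Es s -> E (ginv s) /\ gradV (ginv s) = s) /\
  (forall xi, E xi -> ginv (gradV xi) = xi) /\
  (forall s, Es s -> has_gradient (conj_fun V ginv) s (ginv s)).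

Definition quad_map (n k : nat) (Q : 'I_k -> 'I_n -> 'I_n -> R) (b : 'I_k -> 'I_n -> R)
    (c0 : 'I_k -> R) (x : vec n) : vec k :=
  fun i => vsum (fun j => vsum (fun m => Q i j m * x j * x m))
           + vsum (fun j => b i j * x j) + c0 i.

Record problem (n kf l : nat) := Problem {
  Qf : 'I_kf -> 'I_n -> 'I_n -> R; bf : 'I_kf -> 'I_n -> R; cf0 : 'I_kf -> R;
  Qh : 'I_l -> 'I_n -> 'I_n -> R;  bh : 'I_l -> 'I_n -> R;  ch0 : 'I_l -> R;
  Amat : 'I_n -> 'I_n -> R; cvec : vec n;
  Vf : vec kf -> R; gradVf : vec kf -> vec kf; invgradVf : vec kf -> vec kf;
  Ef : vec kf -> Prop; Efs : vec kf -> Prop;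
  Vh : vec l -> R; gradVh : vec l -> vec l; invgradVh : vec l -> vec l;
  Eh : vec l -> Prop; Ehs : vec l -> Prop }.


Definition Lf n kf l (P : problem n kf l) (x : vec n) : vec kf := quad_map (Qf P) (bf P) (cf0 P) x.
Definition Lh n kf l (P : problem n kf l) (x : vec n) : vec l := quad_map (Qh P) (bh P) (ch0 P) x.
Definition Vfstar n kf l (P : problem n kf l) (s : vec kf) : R := conj_fun (Vf P) (invgradVf P) s.
Definition Vhstar n kf l (P : problem n kf l) (s : vec l) : R := conj_fun (Vh P) (invgradVh P) s.

Definition quadpart n kf l (P : problem n kf l) (x : vec n) : R :=
  1/2 * dot x (fun j => vsum (fun m => Amat P j m * x m)) - dot (cvec P) x.

Definition f_obj n kf l (P : problem n kf l) (x : vec n) : R := Vf P (Lf P x) + quadpart P x.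
Definition h_con n kf l (P : problem n kf l) (x : vec n) : R := Vh P (Lh P x).

Definition Xi1nu n kf l (P : problem n kf l) (nu : R) (x : vec n) (mu tau : R)
    (sf : vec kf) (sh : vec l) : R :=
  dot (Lf P x) sf - Vfstar P sf + (mu + tau) * (dot (Lh P x) sh - Vhstar P sh)
  - nu / 2 * tau ^ 2 + quadpart P x.

Definition Xi1 n kf l (P : problem n kf l) (x : vec n) (mu : R)
    (sf : vec kf) (sh : vec l) : R :=
  dot (Lf P x) sf - Vfstar P sf + mu * (dot (Lh P x) sh - Vhstar P sh) + quadpart P x.

(* x-Hessian of Xi1nu (with s = mu + tau) and of Xi1 (with s = mu) *)
Definition hess n kf l (P : problem n kf l) (s : R) (sf : vec kf) (sh : vec l)
    : 'I_n -> 'I_n -> R :=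
  fun j m => vsum (fun i => sf i * (Qf P i j m + Qf P i m j))
           + s * vsum (fun i => sh i * (Qh P i j m + Qh P i m j)) + Amat P j m.

Definition nonsingular (n : nat) (M : 'I_n -> 'I_n -> R) : Prop :=
  forall v : vec n, (forall j, vsum (fun m => M j m * v m) = 0) -> forall j, v j = 0.

Definition stationary (n : nat) (g : vec n -> R) (x : vec n) : Prop :=
  has_gradient g x (fun _ => 0).
Definition argstat (n : nat) (g : vec n -> R) : vec n :=
  epsilon (inhabits (fun _ => 0)) (stationary g).

(* canonical dual functions (meaningful on their domains, where the stationary
   point is unique) *)
Definition Pdnu n kf l (P : problem n kf l) (nu mu tau : R) (sf : vec kf) (sh : vec l) : R :=
  Xi1nu P nu (argstat (fun x => Xi1nu P nu x mu tau sf sh)) mu tau sf sh.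
Definition Pd n kf l (P : problem n kf l) (mu : R) (sf : vec kf) (sh : vec l) : R :=
  Xi1 P (argstat (fun x => Xi1 P x mu sf sh)) mu sf sh.

Definition dom_Pdnu n kf l (P : problem n kf l) (mu tau : R) (sf : vec kf) (sh : vec l) : Prop :=
  Efs P sf /\ Ehs P sh /\ nonsingular (hess P (mu + tau) sf sh).
Definition dom_Pd n kf l (P : problem n kf l) (mu : R) (sf : vec kf) (sh : vec l) : Prop :=
  Efs P sf /\ Ehs P sh /\ nonsingular (hess P mu sf sh).

Definition dist4 kf l (mu tau : R) (sf : vec kf) (sh : vec l)
    (mu' tau' : R) (sf' : vec kf) (sh' : vec l) : R :=
  sqrt ((mu' - mu) ^ 2 + (tau' - tau) ^ 2
        + dot (vsub sf' sf) (vsub sf' sf) + dot (vsub sh' sh) (vsub sh' sh)).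
Definition dist3 kf l (mu : R) (sf : vec kf) (sh : vec l)
    (mu' : R) (sf' : vec kf) (sh' : vec l) : R :=
  sqrt ((mu' - mu) ^ 2 + dot (vsub sf' sf) (vsub sf' sf) + dot (vsub sh' sh) (vsub sh' sh)).

Definition interior4 kf l (D : R -> R -> vec kf -> vec l -> Prop) mu tau sf sh : Prop :=
  exists r, 0 < r /\ forall mu' tau' sf' sh',
    dist4 mu tau sf sh mu' tau' sf' sh' < r -> D mu' tau' sf' sh'.

Definition zero_grad4 kf l (F : R -> R -> vec kf -> vec l -> R) mu tau sf sh : Prop :=
  forall eps, 0 < eps -> exists d, 0 < d /\ forall mu' tau' sf' sh',
    dist4 mu tau sf sh mu' tau' sf' sh' < d ->
    Rabs (F mu' tau' sf' sh' - F mu tau sf sh) <= eps * dist4 mu tau sf sh mu' tau' sf' sh'.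
Definition zero_grad3 kf l (F : R -> vec kf -> vec l -> R) mu sf sh : Prop :=
  forall eps, 0 < eps -> exists d, 0 < d /\ forall mu' sf' sh',
    dist3 mu sf sh mu' sf' sh' < d ->
    Rabs (F mu' sf' sh' - F mu sf sh) <= eps * dist3 mu sf sh mu' sf' sh'.

Definition critical_Pdnu n kf l (P : problem n kf l) nu mu tau sf sh : Prop :=
  dom_Pdnu P mu tau sf sh /\ zero_grad4 (Pdnu P nu) mu tau sf sh.
Definition critical_Pd n kf l (P : problem n kf l) mu sf sh : Prop :=
  dom_Pd P mu sf sh /\ zero_grad3 (Pd P) mu sf sh.

Definition setting n kf l (P : problem n kf l) : Prop :=
  (forall j m, Amat P j m = Amat P m j) /\
  is_canonical (Vf P) (Ef P) (Efs P) (gradVf P) (invgradVf P) /\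
  is_canonical (Vh P) (Eh P) (Ehs P) (gradVh P) (invgradVh P) /\
  (forall x, Ef P (Lf P x)) /\ (forall x, Eh P (Lh P x)).

(* Main.v *)
Require Import Defs.
From Stdlib Require Import Reals Lra.
From Stdlib Require Import FunctionalExtensionality PropExtensionality.
From mathcomp Require Import ssreflect ssrfun ssrbool eqtype ssrnat seq fintype bigop.
Open Scope R_scope.

Lemma stat_shift (n : nat) (g : vec n -> R) (c : R) :
  stationary (fun x => g x + c) = stationary g.
Proof.
apply: functional_extensionality => x; apply: propositional_extensionality.
rewrite /stationary /has_gradient.
have E : forall y, g y + c - (g x + c) = g y - g x by move=> y; ring.
split => H eps Heps; case: (H eps Heps) => d [Hd Hy]; exists d; split => // y Hy'.
- by have := Hy y Hy'; rewrite E.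
- by rewrite E; apply: Hy.
Qed.

Lemma Pdnu_Pd n kf l (P : problem n kf l) nu mu tau sf sh :
  Pdnu P nu mu tau sf sh = Pd P (mu + tau) sf sh - nu / 2 * tau ^ 2.
Proof.
have E : (fun x => Xi1nu P nu x mu tau sf sh)
   = (fun x => Xi1 P x (mu + tau) sf sh + (- (nu / 2 * tau ^ 2))).
  apply: functional_extensionality => x; rewrite /Xi1nu /Xi1; ring.
rewrite /Pdnu /Pd E /argstat stat_shift /Xi1nu /Xi1; ring.
Qed.

Lemma dot_vsub0 k (v : vec k) : dot (vsub v v) (vsub v v) = 0.
Proof.
rewrite /dot /vsum; apply: (big_ind (fun x => x = 0)) => //.
- by move=> x y -> ->; ring.
- by move=> i _; rewrite /vsub; ring.
Qed.

Lemma sqrt2t t : 0 < t -> sqrt (t ^ 2 + t ^ 2 + 0 + 0) <= 2 * t.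
Proof.
move=> Ht.
rewrite -(sqrt_square (2 * t)); last lra.
apply: sqrt_le_1_alt; nra.
Qed.

Theorem theorem3 (n kf l : nat) (P : problem n kf l) (nu : R) (Hnu : 0 < nu)
  (HP : setting P)
  (mu tau : R) (sf : vec kf) (sh : vec l)
  (Hint : interior4 (dom_Pdnu P) mu tau sf sh)
  (Hcrit : critical_Pdnu P nu mu tau sf sh) :
  tau = 0 /\ critical_Pd P mu sf sh /\ Pdnu P nu mu 0 sf sh = Pd P mu sf sh.
Proof.
case: Hcrit => Hdom Hz.
have Ht0 : tau = 0.
  case: (Rtotal_order tau 0) => [Hlt|[//|Hgt]].
  - have Heps : 0 < - nu * tau / 4 by nra.
    case: (Hz _ Heps) => d [Hd Hb].
    set t := d / 4.
    have Htp : 0 < t by rewrite /t; lra.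
    have H2t : 2 * t < d by rewrite /t; lra.
    have Hdist : dist4 mu tau sf sh (mu + t) (tau - t) sf sh <= 2 * t.
      rewrite /dist4 !dot_vsub0.
      replace (mu + t - mu) with t by ring; replace (tau - t - tau) with (- t) by ring.
      replace ((- t) ^ 2) with (t ^ 2) by ring.
      by apply: sqrt2t.
    have := Hb (mu + t) (tau - t) sf sh (Rle_lt_trans _ _ _ Hdist H2t).
    rewrite !Pdnu_Pd.
    replace (mu + t + (tau - t)) with (mu + tau) by ring.
    set D := dist4 _ _ _ _ _ _ _ _.
    set Q := Pd P (mu + tau) sf sh.
    replace (Q - nu / 2 * (tau - t) ^ 2 - (Q - nu / 2 * tau ^ 2))
      with (nu / 2 * (t * (2 * tau - t))) by ring.
    rewrite Rabs_left; last nra.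
    move=> H.
    have : - nu * tau / 4 * D <= - nu * tau / 4 * (2 * t) by apply: Rmult_le_compat_l; [lra | exact Hdist].
    nra.
  - have Heps : 0 < nu * tau / 4 by nra.
    case: (Hz _ Heps) => d [Hd Hb].
    set t := d / 4.
    have Htp : 0 < t by rewrite /t; lra.
    have H2t : 2 * t < d by rewrite /t; lra.
    have Hdist : dist4 mu tau sf sh (mu - t) (tau + t) sf sh <= 2 * t.
      rewrite /dist4 !dot_vsub0.
      replace (mu - t - mu) with (- t) by ring; replace (tau + t - tau) with t by ring.
      replace ((- t) ^ 2) with (t ^ 2) by ring.
      by apply: sqrt2t.
    have := Hb (mu - t) (tau + t) sf sh (Rle_lt_trans _ _ _ Hdist H2t).
    rewrite !Pdnu_Pd.
    replace (mu - t + (tau + t)) with (mu + tau) by ring.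
    set D := dist4 _ _ _ _ _ _ _ _.
    set Q := Pd P (mu + tau) sf sh.
    replace (Q - nu / 2 * (tau + t) ^ 2 - (Q - nu / 2 * tau ^ 2))
      with (- (nu / 2 * (t * (2 * tau + t)))) by ring.
    rewrite Rabs_Ropp Rabs_right; last nra.
    move=> H.
    have : nu * tau / 4 * D <= nu * tau / 4 * (2 * t) by apply: Rmult_le_compat_l; [lra | exact Hdist].
    nra.
subst tau.
have EP : forall m s1 s2, Pdnu P nu m 0 s1 s2 = Pd P m s1 s2.
  by move=> m s1 s2; rewrite Pdnu_Pd Rplus_0_r; ring.
split => //; split; last by apply: EP.
split.
  by case: Hdom => [A [B C]]; rewrite /dom_Pd; rewrite Rplus_0_r in C.
move=> eps Heps; case: (Hz eps Heps) => d [Hd Hb]; exists d; split => //.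
move=> mu' sf' sh'.
have Ed : dist4 mu 0 sf sh mu' 0 sf' sh' = dist3 mu sf sh mu' sf' sh'.
  rewrite /dist4 /dist3; f_equal; ring.
rewrite -Ed -!EP; apply: Hb.
Qed.
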